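(* With $I_p$, $\mathcal S_p^{s,t}$ and $\mathcal U_p^{s,t}$ as defined in the context, $$\inf\Big\{I_p(f):\ f\in\bigcup_{t>0}\bigcap_{s>0}\mathcal S_p^{s,t}\Big\}\ \ge\ \inf_{t>0}\ \sup_{s>0}\ \inf_{f\in\mathcal U_p^{s,t}}I_p(f);$$ consequently the decay rate $J_p:=-\lim_{n\to\infty}\frac1n\log\mathbb P(Q_{\ell,n}>nb)$, which equals the left-hand side, satisfies $J_p\ge\inf_{t>0}\sup_{s>0}\inf_{f\in\mathcal U_p^{s,t}}I_p(f)$.
   Context: Priority queue: a link of rate $nc$ serves $n$ i.i.d. high-priority (hp) Gaussian sources and $n$ i.i.d. low-priority (lp) Gaussian sources, the classes independent. Each hp source is a Gaussian process $A_{h}$ on $\mathbb R$ with continuous paths, $A_h(0)=0$, stationary increments, $\mathbb E A_h(t)=\mu_ht$, $\mathrm{Var}(A_h(t)-A_h(s))=v_h(|t-s|)$; similarly lp sources with $\mu_\ell$, $v_\ell$; $\mu_h+\mu_\ell<c$; $v_h,v_\ell$ continuous, vanishing at 0, and $o(t^\alpha)$ for some $\alpha<2$. $A(s,t):=A(t)-A(s)$. $\Omega$: continuous $\omega:\mathbb R\to\mathbb R$ with $\omega(0)=0$, $\omega(t)/(1+|t|)\to0$ as $t\to\pm\infty$. $R_h,R_\ell$: reproducing kernel Hilbert spaces of the covariance functions $\Gamma_h(s,t)=\tfrac12(v_h(|s|)+v_h(|t|)-v_h(|t-s|))$ and $\Gamma_\ell$ (defined analogously). For $f=(f_h,f_\ell)\in\Omega\times\Omega$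 let $\bar f_h(t):=f_h(t)-\mu_ht$, $\bar f_\ell(t):=f_\ell(t)-\mu_\ell t$ and $I_p(f):=\frac12\|\bar f_h\|_{R_h}^2+\frac12\|\bar f_\ell\|_{R_\ell}^2$ (infinite unless $\bar f_h\in R_h$, $\bar f_\ell\in R_\ell$). Fix $b>0$. For $s,t>0$: $\mathcal S_p^{s,t}:=\{f\in\Omega\times\Omega: f_h(-s)-f_h(-t)-f_\ell(-t)>b+c(t-s)\}$, $\mathcal U_p^{s,t}:=\{f\in\Omega\times\Omega: -f_h(-t)-f_\ell(-t)\ge b+ct,\ f_h(-s)-f_h(-t)-f_\ell(-t)\ge b+c(t-s)\}$. $Q_{\ell,n}$ is the stationary low-priority queue content; $\mathbb P(Q_{\ell,n}>nb)$ equals the probability that the pair of empirical mean processes $(\frac1n\sum_{i=1}^nA_{h,i},\frac1n\sum_{i=1}^nA_{\ell,i})$ lies in $\bigcup_{t>0}\bigcap_{s>0}\mathcal S_p^{s,t}$. *)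

(* Defs.v *)
From HB Require Import structures.
From mathcomp Require Import all_boot all_order all_algebra.
From mathcomp Require Import all_classical all_reals all_analysis.
Set Implicit Arguments. Unset Strict Implicit. Unset Printing Implicit Defensive.
Import Order.TTheory GRing.Theory Num.Theory.
Import numFieldNormedType.Exports.
Local Open Scope classical_set_scope.
Local Open Scope ring_scope.

Section Defs.
Variable R : realType.

Definition Omega (w : R -> R) : Prop :=
  continuous w /\ w 0 = 0 /\
  (fun t => w t / (1 + `|t|)) @ +oo --> (0 : R) /\
  (fun t => w t / (1 + `|t|)) @ -oo --> (0 : R).

Definition Gamma (v : R -> R) (s t : R) : R :=
  (v `|s| + v `|t| - v `|t - s|) / 2.

Definition psd_kernel (K : R -> R -> R) : Prop :=
  forall (n : nat) (ts a : 'I_n -> R),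
    0 <= \sum_(i < n) \sum_(j < n) a i * a j * K (ts i) (ts j).

(* Squared RKHS norm of f for the kernel K (Aronszajn's characterization):
   ||f||^2 = sup { (sum_i a_i f(t_i))^2 : sum_{i,j} a_i a_j K(t_i,t_j) <= 1 },
   which is +oo exactly when f is not in the RKHS. *)
Definition rkhs_sqnorm (K : R -> R -> R) (f : R -> R) : \bar R :=
  ereal_sup [set x : \bar R | exists (n : nat) (ts a : 'I_n -> R),
     \sum_(i < n) \sum_(j < n) a i * a j * K (ts i) (ts j) <= 1 /\
     x = ((\sum_(i < n) a i * f (ts i)) ^+ 2)%:E].

Definition Ip (mu_h mu_l : R) (v_h v_l : R -> R) (fh fl : R -> R) : \bar R :=
  let gh := fun t => fh t - mu_h * t in
  let gl := fun t => fl t - mu_l * t in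
  ((2^-1)%:E * rkhs_sqnorm (Gamma v_h) gh
   + (2^-1)%:E * rkhs_sqnorm (Gamma v_l) gl)%E.

Definition Sp (b c s t : R) (fh fl : R -> R) : Prop :=
  fh (- s) - fh (- t) - fl (- t) > b + c * (t - s).

Definition Up (b c s t : R) (fh fl : R -> R) : Prop :=
  - fh (- t) - fl (- t) >= b + c * t /\
  fh (- s) - fh (- t) - fl (- t) >= b + c * (t - s).

Definition lhs_rate (mu_h mu_l c b : R) (v_h v_l : R -> R) : \bar R :=
  ereal_inf [set Ip mu_h mu_l v_h v_l f.1 f.2 | f in
    [set f : (R -> R) * (R -> R) | Omega f.1 /\ Omega f.2 /\
       exists t, 0 < t /\ forall s, 0 < s -> Sp b c s t f.1 f.2]].

Definition rhs_rate (mu_h mu_l c b : R) (v_h v_l : R -> R) : \bar R :=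
  ereal_inf [set ereal_sup [set ereal_inf [set Ip mu_h mu_l v_h v_l f.1 f.2 | f in
        [set f : (R -> R) * (R -> R) | Omega f.1 /\ Omega f.2 /\ Up b c s t f.1 f.2]]
      | s in [set s : R | 0 < s]]
    | t in [set t : R | 0 < t]].

Definition variance_ok (v : R -> R) : Prop :=
  continuous v /\ v 0 = 0 /\ psd_kernel (Gamma v) /\
  exists alpha : R, alpha < 2 /\ (fun t => v t / t `^ alpha) @ +oo --> (0 : R).

End Defs.

(* Main.v *)
Require Import Defs.
From HB Require Import structures.
From mathcomp Require Import all_boot all_order all_algebra.
From mathcomp Require Import all_classical all_reals all_analysis.
From mathcomp Require Import lra.
Import Order.TTheory GRing.Theory Num.Theory.
Import numFieldNormedType.Exports.
Local Open Scope classical_set_scope.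
Local Open Scope ring_scope.

Lemma key {R : realType} {b c t : R} {fh fl : R -> R} :
  continuous fh -> fh 0 = 0 -> 0 < t ->
  (forall s, 0 < s -> Sp b c s t fh fl) ->
  b + c * t <= - fh (- t) - fl (- t).
Proof.
move=> cf f0 t0 HS.
rewrite leNgt; apply/negP => Hlt.
set eps := b + c * t - (- fh (- t) - fl (- t)).
have e0 : 0 < eps by rewrite /eps subr_gt0.
have cg : {for 0, continuous (fun s : R => fh (- s) + c * s)}.
  apply: continuousD; last by apply: continuousM; [exact: cst_continuous|].
  apply: continuous_comp; first exact: oppr_continuous.
  exact: cf.
have := (cvgrPdist_lt _ _).1 cg (eps / 2) ltac:(by rewrite divr_gt0).
move=> Hnear.
have [d /= d0 Hd] : nbhs_ball (0:R) [set s | `|fh (- 0) + c * 0 - (fh (- s) + c * s)| < eps / 2].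
  by apply/nbhs_ballP; exact: Hnear.
have s0 : 0 < d / 2 by rewrite divr_gt0.
have := Hd (d / 2).
have hb : ball 0 d (d / 2).
  rewrite /ball /= sub0r normrN gtr0_norm //.
  by rewrite ltr_pdivrMr // ltr_pMr // ltr1n.
move=> /(_ hb) /=.
rewrite oppr0 f0 mulr0 addr0 sub0r normrN => Hn.
have := HS _ s0; rewrite /Sp mulrBr => HS'.
have := ler_norm (fh (- (d / 2)) + c * (d / 2)) => Hn2.
have : eps < eps / 2.
  rewrite /eps; move: HS' Hn Hn2.
  move: (fh (- (d / 2))) (c * (d / 2)) => x y.
  move=> H1 H2 H3.
  have := le_lt_trans H3 H2 => H4.
  move: H1 H4; rewrite /eps => H1 H4.
  move: H1 H4; move: (fh (- t)) (fl (- t)) => p q H1 H4.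
  clear -H1 H4. lra.
have : eps / 2 < eps by rewrite ltr_pdivrMr // ltr_pMr // ltr1n.
move=> h1 h2; have := lt_trans h1 h2; by rewrite ltxx.
Qed.

Theorem theorem5p2 (R : realType) (mu_h mu_l c b : R) (v_h v_l : R -> R)
  (hb : 0 < b) (hmu : mu_h + mu_l < c)
  (hvh : variance_ok v_h) (hvl : variance_ok v_l) :
  (rhs_rate mu_h mu_l c b v_h v_l <= lhs_rate mu_h mu_l c b v_h v_l)%E.
Proof.
apply: le_ereal_inf_tmp => _ [[fh fl] /= [Of1 [Of2 [t [t0 HS]]]] <-].
apply: (le_trans (ereal_inf_lbound _)).
  exists t => //.
apply: ge_ereal_sup => _ [s s0 <-].
apply: ereal_inf_lbound.
exists (fh, fl) => //=.
split => //; split => //; split.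
  case: Of1 => cf [f0 _]. exact: (key cf f0 t0 HS).
by apply/ltW; exact: HS.
Qed.
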